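(* Let $n\ge 2$ and let $\mathrm{Dic}_n=\langle a,b : a^n=b^2,\ a^{2n}=e,\ b^{-1}ab=a^{-1}\rangle$ be the dicyclic group of order $4n$. Let $H$ be a normal subgroup of $\mathrm{Dic}_n$. Then $\Gamma_{\mathrm{Dic}_n,H}$ admits a perfect code if and only if either $H=\mathrm{Dic}_n$, or $H=\langle a^t\rangle$ for a positive divisor $t$ of $2n$ such that $2n/t$ is odd or $2n/t=2$.
   Context: For a normal subgroup $H$ of a finite group $G$ with identity $e$, the subgroup sum graph $\Gamma_{G,H}$ is the simple undirected graph with vertex set $G$ in which distinct vertices $x,y$ are adjacent if and only if $xy\in H\setminus\{e\}$. A perfect code in a graph is a set $C$ of vertices that is independent and such that every vertex not in $C$ is adjacent to exactly one vertex of $C$. *)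

(* Defs.v *)
From mathcomp Require Import all_boot all_fingroup.
Set Implicit Arguments. Unset Strict Implicit. Unset Printing Implicit Defensive.
Local Open Scope group_scope.

Definition ssg_adj (gT : finGroupType) (H : {set gT}) (x y : gT) : bool :=
  (x != y) && (x * y \in H :\ 1).

Definition ssg_perfect_code (gT : finGroupType) (G H C : {set gT}) : Prop :=
  [/\ C \subset G,
      {in C &, forall x y, ~~ ssg_adj H x y}
    & {in G :\: C, forall x, #|[set c in C | ssg_adj H x c]| = 1%N}].

Definition is_dicyclic (gT : finGroupType) (G : {set gT}) (n : nat) (a b : gT) : Prop :=
  [/\ G = <<[set a; b]>>, a ^+ n = b ^+ 2, a ^+ (2 * n) = 1,
      a ^ b = a^-1 & #|G| = (4 * n)%N].

(* Main.v *)
Require Import Defs.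
From mathcomp Require Import all_boot all_fingroup all_solvable.
Set Implicit Arguments. Unset Strict Implicit. Unset Printing Implicit Defensive.
Local Open Scope group_scope.

Lemma inN (gT : finGroupType) (G H : {group gT}) x :
  H <| G -> x \in G -> x \in 'N(H).
Proof. by move=> nHG xG; apply: (subsetP (normal_norm nHG)). Qed.

Lemma nH_conj (gT : finGroupType) (G H : {group gT}) x h :
  H <| G -> x \in G -> (x * h * x^-1 \in H) = (h \in H).
Proof.
move=> nHG xG; have xN : x^-1 \in 'N(H) by apply: inN nHG _; rewrite groupV.
by rewrite -(memJ_norm h xN) conjgE invgK mulgA.
Qed.

Lemma swapH (gT : finGroupType) (G H : {group gT}) u v :
  H <| G -> u \in G -> (u * v \in H) = (v * u \in H).
Proof.
move=> nHG uG; have uN := inN nHG uG.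
by rewrite -(memJ_norm (u * v) uN) conjgE !mulgA mulVg mul1g.
Qed.

Lemma adjE (gT : finGroupType) (H : {set gT}) x y :
  ssg_adj H x y = [&& x != y, x * y != 1 & x * y \in H].
Proof. by rewrite /ssg_adj in_setD1. Qed.

Lemma sq_ne1 (gT : finGroupType) (c : gT) : c ^+ 2 != 1 -> c^-1 != c.
Proof.
move=> h; apply/eqP=> e; move/eqP: h; apply.
by rewrite expgS expg1 -{1}e mulVg.
Qed.

Lemma no_pc (gT : finGroupType) (G H : {group gT}) x :
  H <| G -> x \in G -> x ^+ 2 \in H -> 2 < #|H| ->
  (forall y, x^-1 * y \in H -> y ^+ 2 != 1) ->
  ~ exists C, ssg_perfect_code G H C.
Proof.
move=> nHG xG x2H H3 noinv [C [sCG indC domC]].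
have sHG := normal_sub nHG.
have k1 y : x^-1 * y \in H -> y \in G.
  by move=> h; rewrite -(mulVKg x y) groupM // (subsetP sHG).
have k2 y z : x^-1 * y \in H -> x^-1 * z \in H -> y * z \in H.
  move=> hy hz.
  have -> : y * z = (x * (x^-1 * y) * x^-1) * (x ^+ 2) * (x^-1 * z).
    by rewrite expgS expg1 !mulgA mulgV mul1g mulgKV mulgK.
  by apply: groupM => //; apply: groupM => //; rewrite (nH_conj _ nHG xG).
have k0 : x^-1 * x \in H by rewrite mulVg group1.
have k3 y : x^-1 * y \in H -> x^-1 * y^-1 \in H.
  by move=> hy; rewrite -invMg groupV k2.
have k5 y c : x^-1 * y \in H -> y * c \in H -> x^-1 * c \in H.
  move=> hy hyc; have hyx := k2 _ _ hy k0.
  have -> : x^-1 * c = (y * x)^-1 * (y * c) by rewrite invMg !mulgA mulgKV.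
  by rewrite groupM // groupV.
have [c cC cK] : exists2 c, c \in C & x^-1 * c \in H.
  case xC : (x \in C); first by exists x.
  have xGC : x \in G :\: C by rewrite inE xC xG.
  have /eqP/cards1P[c Ec] := domC x xGC.
  have : c \in [set c0 in C | ssg_adj H x c0] by rewrite Ec set11.
  rewrite inE adjE => /andP[cC /and3P[_ _ xcH]].
  by exists c => //; apply: k5 k0 xcH.
have cinv : c^-1 != c by apply: sq_ne1; apply: noinv.
have ciK := k3 _ cK.
case ciC : (c^-1 \in C).
  have : ~~ (x *: H \subset [set c; c^-1]).
    apply/negP=> /subset_leq_card; rewrite card_lcoset cards2.
    by rewrite leqNgt (leq_trans _ H3) //; case: (c != c^-1).
  case/subsetPn=> z; rewrite mem_lcoset => zK.
  rewrite !inE negb_or => /andP[zc zci].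
  have zG := k1 _ zK.
  have adjc : ssg_adj H z c.
    rewrite adjE zc k2 // andbT; apply: contra (zci).
    by rewrite [z == _]eq_mulgV1 invgK.
  have adjci : ssg_adj H z c^-1.
    rewrite adjE zci k2 // andbT; apply: contra (zc).
    by rewrite [z == _]eq_mulgV1.
  have zC : z \notin C by apply/negP=> zC; move: (indC _ _ zC cC); rewrite adjc.
  have := domC z; rewrite inE zC zG => /(_ isT) h.
  have : [set c; c^-1] \subset [set c0 in C | ssg_adj H z c0].
    by apply/subsetP=> w; rewrite !inE => /orP[] /eqP->; rewrite ?cC ?ciC ?adjc ?adjci.
  move/subset_leq_card; rewrite h cards2 eq_sym cinv.
  by [].
have ciG := k1 _ ciK.
have := domC c^-1; rewrite inE ciC ciG => /(_ isT) /eqP/cards1P[d Ed].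
have : d \in [set c0 in C | ssg_adj H c^-1 c0] by rewrite Ed set11.
rewrite inE adjE => /andP[dC /and3P[cid cid1 cidH]].
have dK := k5 _ _ ciK cidH.
have : ssg_adj H c d.
  rewrite adjE k2 // andbT; apply/andP; split.
    by apply: contraNneq cid1 => <-; rewrite mulVg.
  apply: contra cid => /eqP h; apply/eqP.
  by rewrite -(mulKg c d) h mulg1.
by rewrite (negbTE (indC _ _ cC dC)).
Qed.

Definition Uset (gT : finGroupType) (H : {set gT}) x :=
  [set y | (x^-1 * y \in H) || (x * y \in H)].
Definition Sset (gT : finGroupType) (H : {set gT}) x :=
  [set y in Uset H x | y ^+ 2 == 1].
Definition Cset (gT : finGroupType) (G H : {set gT}) :=
  [set x in G | if Sset H x != set0 then x == repr (Sset H x)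
                else (x == repr (Uset H x)) || (x^-1 == repr (Uset H x))].

Lemma u0 (gT : finGroupType) (H : {group gT}) x : x \in Uset H x.
Proof. by rewrite inE mulVg group1. Qed.

Lemma uinv (gT : finGroupType) (H : {group gT}) x : x^-1 \in Uset H x.
Proof. by rewrite inE mulgV group1 orbT. Qed.

Lemma u1 (gT : finGroupType) (G H : {group gT}) x y :
  H <| G -> x \in G -> y \in Uset H x -> y \in G.
Proof.
move=> nHG xG; have sHG := normal_sub nHG.
rewrite inE => /orP[] h.
  by rewrite -(mulVKg x y) groupM // (subsetP sHG).
by rewrite -(mulKg x y) groupM ?groupV // (subsetP sHG).
Qed.

Lemma u2 (gT : finGroupType) (G H : {group gT}) x y :
  H <| G -> x \in G -> y \in Uset H x -> Uset H y = Uset H x.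
Proof.
move=> nHG xG yU; have yG := u1 nHG xG yU.
move: yU; rewrite inE => /orP[] h; apply/setP => z; rewrite !inE.
  have e1 : x^-1 * z = (x^-1 * y) * (y^-1 * z) by rewrite !mulgA mulgK.
  have e2 : y * z = (x * (x^-1 * y) * x^-1) * (x * z).
    by rewrite !mulgA mulgV mul1g mulgKV.
  have hc : x * (x^-1 * y) * x^-1 \in H by rewrite (nH_conj _ nHG xG).
  by rewrite e1 e2 (groupMl _ h) (groupMl _ hc).
have e1 : x * z = (x * y) * (y^-1 * z) by rewrite !mulgA mulgK.
have e2 : y * z = (x^-1 * (x * y) * x^-1^-1) * (x^-1 * z).
  by rewrite invgK !mulgA mulVg mul1g mulgK.
have hc : x^-1 * (x * y) * x^-1^-1 \in H by rewrite (nH_conj _ nHG (groupVr xG)).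
by rewrite e1 e2 (groupMl _ h) (groupMl _ hc) orbC.
Qed.

Lemma SsetE (gT : finGroupType) (G H : {group gT}) x y :
  H <| G -> x \in G -> y \in Uset H x -> Sset H y = Sset H x.
Proof. by move=> nHG xG yU; rewrite /Sset (u2 nHG xG yU). Qed.

Lemma u4 (gT : finGroupType) (H : {group gT}) x y :
  ssg_adj H x y -> y \in Uset H x.
Proof. by rewrite adjE inE => /and3P[_ _ ->]; rewrite orbT. Qed.

Lemma inv_sq1 (gT : finGroupType) (s : gT) : s ^+ 2 = 1 -> s^-1 = s.
Proof. by move=> h; apply/eqP; rewrite eq_invg_mul -expg2 h. Qed.

Lemma exists_pc (gT : finGroupType) (G H : {group gT}) :
  H <| G ->
  (forall x, x \in G -> x ^+ 2 \in H ->
     #|H| <= 2 \/ exists y, x^-1 * y \in H /\ y ^+ 2 = 1) ->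
  exists C, ssg_perfect_code G H C.
Proof.
move=> nHG hyp; exists (Cset G H); split.
- by apply/subsetP => x; rewrite inE => /andP[].
- move=> c d; rewrite !inE => /andP[cG cc] /andP[dG dd]; apply/negP => adj.
  have dU := u4 adj; have eU := u2 nHG cG dU; have eS := SsetE nHG cG dU.
  rewrite eS eU in dd.
  move: adj; rewrite adjE => /and3P[cd cd1 cdH].
  case: ifP cc dd => _.
    by move=> /eqP ec /eqP ed; rewrite ec ed eqxx in cd.
  move=> /orP[]/eqP ec /orP[]/eqP ed.
  - by rewrite ec ed eqxx in cd.
  - by rewrite ec -ed mulVg eqxx in cd1.
  - by rewrite ed -ec mulgV eqxx in cd1.
  - by rewrite -ed in ec; rewrite (invg_inj ec) eqxx in cd.
move=> x; rewrite inE => /andP[xnC xG].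
rewrite inE xG /= in xnC.
apply/eqP/cards1P.
case: (boolP (Sset H x != set0)) => Sx.
  rewrite Sx in xnC.
  have [s0 s0S] := set0Pn _ Sx.
  set s := repr (Sset H x).
  have sS : s \in Sset H x := mem_repr _ s0S.
  move: (sS); rewrite inE => /andP[sU /eqP s2].
  have sG := u1 nHG xG sU.
  have sC : s \in Cset G H.
    by rewrite inE sG (SsetE nHG xG sU) Sx eqxx.
  exists s; apply/setP => c; rewrite !inE; apply/andP/eqP.
    case=> cC adjxc; have cU := u4 adjxc.
    by move: cC; rewrite (u1 nHG xG cU) (SsetE nHG xG cU) Sx => /eqP.
  move->; split; first by move: sC; rewrite inE.
  have xs : x != s by exact: xnC.
  rewrite adjE xs /=; apply/andP; split.
    apply: contra xs => /eqP e; apply/eqP.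
    by rewrite -(inv_sq1 s2) -(mulgK s x) e mul1g.
  move: sU; rewrite inE => /orP[] h //.
  have -> : x * s = s * (x^-1 * s)^-1 * s^-1.
    by rewrite invMg invgK !mulgA mulgV mul1g (inv_sq1 s2).
  by rewrite (nH_conj _ nHG sG) groupV.
rewrite negbK in Sx; rewrite (eqP Sx) eqxx /= in xnC.
set r := repr (Uset H x).
have rU : r \in Uset H x := mem_repr _ (u0 H x).
have rG := u1 nHG xG rU.
have noS y : y \in Uset H x -> y ^+ 2 != 1.
  move=> yU; apply/negP => y2.
  have : y \in Sset H x by rewrite inE yU y2.
  by rewrite (eqP Sx) inE.
have r2 := noS r rU.
have riU : r^-1 \in Uset H x by rewrite -(u2 nHG xG rU) uinv.
have [xr xri'] : x != r /\ x^-1 != r by move: xnC; rewrite negb_or => /andP[].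
have xri : x != r^-1 by rewrite -(inj_eq invg_inj) invgK.
have rri := sq_ne1 r2.
case: (boolP (x ^+ 2 \in H)) => x2.
  case: (hyp x xG x2) => [H2 | [y [hy y2]]]; last first.
    by move: (noS y); rewrite inE hy y2 eqxx => /(_ isT).
  exfalso.
  have hx2 y : y \in Uset H x -> y \in x *: H.
    rewrite inE mem_lcoset => /orP[] // h.
    have -> : x^-1 * y = (x ^+ 2)^-1 * (x * y).
      by rewrite expgS expg1 invMg !mulgA mulgKV.
    by rewrite groupM ?groupV.
  have : [set r; r^-1] \subset x *: H :\ x.
    apply/subsetP => w; rewrite !inE => /orP[]/eqP ->.
      by rewrite eq_sym xr hx2.
    by rewrite eq_sym xri hx2.
  move/subset_leq_card; rewrite cards2 eq_sym rri.
  have := cardsD1 x (x *: H); rewrite card_lcoset hx2 ?u0 //.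
  move=> e h; move: H2; rewrite e /= ltnS leqNgt => /negP; apply; exact: h.
have notboth : ~~ ((x * r \in H) && (x * r^-1 \in H)).
  apply/andP => [[h1 h2]]; rewrite (swapH _ nHG xG) in h1.
  have := groupM h2 h1; rewrite !mulgA mulgKV -expg2.
  by rewrite (negbTE x2).
pose c := if x * r \in H then r else r^-1.
have xc : x * c \in H.
  rewrite /c; case: ifP => // h.
  move: rU; rewrite inE h orbF => h'.
  rewrite -[x * r^-1]invgK invMg invgK groupV.
  by rewrite -(swapH _ nHG (groupVr xG)).
have cU : c \in Uset H x by rewrite /c; case: ifP.
have cG := u1 nHG xG cU.
have cr : (c == r) || (c^-1 == r).
 rewrite /c; case: ifP => _; first by rewrite eqxx. by rewrite invgK eqxx orbT.
have cC : c \in Cset G H.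
  by rewrite inE cG (SsetE nHG xG cU) (u2 nHG xG cU) (eqP Sx) eqxx -/r.
exists c; apply/setP => d; rewrite !inE; apply/andP/eqP.
  case=> dC adjxd; have dU := u4 adjxd.
  move: dC; rewrite (u1 nHG xG dU) (SsetE nHG xG dU) (u2 nHG xG dU) (eqP Sx) eqxx /= -/r.
  move: adjxd; rewrite adjE => /and3P[_ _ xd].
  rewrite /c; case/orP => /eqP e.
    by rewrite -e xd.
  have ed : d = r^-1 by rewrite -e invgK.
  rewrite ed in xd; case: ifP => // h.
  by move: notboth; rewrite h xd.
move->; split; first by move: cC; rewrite inE.
rewrite adjE xc andbT; apply/andP; split.
  by apply/eqP => e; case/orP: cr => /eqP cr; [move: xr | move: xri']; rewrite e cr eqxx.
apply/eqP => e.
have ec : c = x^-1 by rewrite -(mulKg x c) e mulg1.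
by move: xnC cr; rewrite ec invgK => /norP[/negbTE -> /negbTE ->].
Qed.

Lemma dic_gen (gT : finGroupType) (G : {group gT}) n a b :
  is_dicyclic G n a b -> (a \in G) * (b \in G).
Proof.
by case=> GE _ _ _ _; rewrite GE !mem_gen // !inE eqxx ?orbT.
Qed.

Lemma dic_comm (gT : finGroupType) (G : {group gT}) n a b i :
  is_dicyclic G n a b ->
  (a ^+ i * b = b * (a ^+ i)^-1) * (b * a ^+ i = (a ^+ i)^-1 * b).
Proof.
case=> _ _ _ ab _.
have e1 : (a ^+ i) ^ b = (a ^+ i)^-1 by rewrite conjXg ab expVgn.
split; first by rewrite conjgC e1.
by rewrite [RHS]conjgC conjVg e1 invgK.
Qed.

Lemma dic_b4 (gT : finGroupType) (G : {group gT}) n a b :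
  is_dicyclic G n a b -> b ^+ 4 = 1.
Proof.
by case=> _ an a2n _ _; rewrite (expgnA b 2 2) -an -expgnA mulnC.
Qed.

Lemma dic_elt (gT : finGroupType) (G : {group gT}) n a b x :
  is_dicyclic G n a b -> x \in G ->
  exists i, x = a ^+ i \/ x = a ^+ i * b.
Proof.
move=> D; have [aG bG] := dic_gen D.
have b4 := dic_b4 D.
case: D => GE an a2n ab cG.
have nab : b \in 'N(<[a]>) by apply/normP; rewrite -cycleJ ab cycleV.
have GE' : G :=: <[a]> * <[b]>.
  by rewrite -norm_joinEr ?cycle_subG // /cycle joing_idl joing_idr joingE GE.
rewrite GE' => /mulsgP[y z /cycleP[i ->] /cycleP[j ->] ->].
rewrite -(expg_mod _ b4).
have : j %% 4 < 4 by rewrite ltn_pmod.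
case: (j %% 4) => [|[|[|[|k]]]] // _.
- by exists i; left; rewrite mulg1.
- by exists i; right; rewrite expg1.
- by exists (i + n); left; rewrite -an expgnDr.
- by exists (i + n); right; rewrite expgSr -an expgnDr mulgA.
Qed.

Lemma dic_ord (gT : finGroupType) (G : {group gT}) n a b :
  (0 < n)%N -> is_dicyclic G n a b -> (#[a] = 2 * n)%N /\ b \notin <[a]>.
Proof.
move=> n0 D; have [aG bG] := dic_gen D.
have hel := dic_elt D.
case: D => GE an a2n ab cG.
have sG : G \subset <[a]> :|: <[a]> :* b.
  apply/subsetP => x /hel[i [->|->]]; rewrite inE.
    by rewrite mem_cycle.
  by rewrite mem_rcoset mulgK mem_cycle orbT.
have le1 := subset_leq_card sG.
have le2 := (leq_card_setU <[a]> (<[a]> :* b)).1.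
rewrite card_rcoset -orderE cG in le1 le2.
have dv : (#[a] %| 2 * n)%N by rewrite order_dvdn a2n.
have le3 : (#[a] <= 2 * n)%N by rewrite dvdn_leq // muln_gt0.
split.
  apply/eqP; rewrite eqn_leq le3 /=.
  rewrite -(leq_pmul2l (isT : (0 < 2)%N)) mulnA; apply: (leq_trans le1); by rewrite (leq_trans le2) // mul2n -addnn.
apply/negP => ba.
have : G \subset <[a]>.
  apply/subsetP => x /hel[i [->|->]]; first by rewrite mem_cycle.
  by rewrite groupM ?mem_cycle.
move/subset_leq_card; rewrite -orderE cG => h.
have := leq_trans h le3.
by rewrite leq_pmul2r // ltn_geF.
Qed.

Lemma dic_sq (gT : finGroupType) (G : {group gT}) n a b i :
  is_dicyclic G n a b -> (a ^+ i * b) ^+ 2 = a ^+ n.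
Proof.
move=> D; have [_ e] := dic_comm i D.
case: D => _ an _ _ _.
by rewrite expgS expg1 -mulgA (mulgA b) e !mulgA mulgV mul1g -expg2 an.
Qed.

Lemma dic_inv (gT : finGroupType) (G : {group gT}) n a b y :
  (0 < n)%N -> is_dicyclic G n a b -> y \in G -> y ^+ 2 = 1 ->
  y = 1 \/ y = a ^+ n.
Proof.
move=> n0 D yG y2; have [oa _] := dic_ord n0 D.
have a2n : a ^+ (2 * n) = 1 by rewrite -oa expg_order.
case: (dic_elt D yG) => i [ey|ey]; last first.
  move: y2; rewrite ey (dic_sq _ D) => /eqP; rewrite -order_dvdn oa.
  by move/dvdn_leq => /(_ n0); rewrite -{2}(mul1n n) leq_pmul2r // ltn_geF.
move: y2; rewrite ey -expgnA => /eqP; rewrite -order_dvdn oa mulnC.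
rewrite (dvdn_pmul2r (isT : (0 < 2)%N)) => /dvdnP[k ->].
have an2 : (a ^+ n) ^+ 2 = 1 by rewrite -expgnA mulnC.
rewrite mulnC expgnA -(expg_mod _ an2).
have : (k %% 2 < 2)%N by rewrite ltn_pmod.
by case: (k %% 2) => [|[|]] // _; [left; rewrite expg0 | right; rewrite expg1].
Qed.

Lemma dic_A (gT : finGroupType) (G H : {group gT}) n a b x :
  (0 < n)%N -> is_dicyclic G n a b -> H <| G ->
  (exists C, ssg_perfect_code G H C) ->
  x \in G -> x ^+ 2 \in H -> (2 < #|H|)%N ->
  (x \in H) || (x^-1 * a ^+ n \in H).
Proof.
move=> n0 D nHG pc xG x2 H3.
case: (boolP ((x \in H) || (x^-1 * a ^+ n \in H))) => // hn; exfalso.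
apply: (no_pc nHG xG x2 H3 _ pc) => y hy; apply/eqP => y2.
have yG : y \in G.
  by rewrite -(mulVKg x y) groupM // (subsetP (normal_sub nHG)).
move: hn; rewrite negb_or => /andP[h1 h2].
case: (dic_inv n0 D yG y2) => ey; rewrite ey in hy.
  by rewrite mulg1 groupV in hy; rewrite hy in h1.
by rewrite hy in h2.
Qed.

Lemma dic_fwd (gT : finGroupType) (G H : {group gT}) n a b :
  (2 <= n)%N -> is_dicyclic G n a b -> H <| G ->
  (exists C, ssg_perfect_code G H C) ->
  (H :=: G \/
   exists t : nat, [/\ (0 < t)%N, (t %| 2 * n)%N,
                       odd ((2 * n) %/ t) || ((2 * n) %/ t == 2)%N
                     & H :=: <[a ^+ t]>]).
Proof.
move=> n2 D nHG pc; have n0 : (0 < n)%N by apply: leq_trans n2.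
have [oa bna] := dic_ord n0 D; have [aG bG] := dic_gen D.
have sHG := normal_sub nHG.
have A := fun x => dic_A n0 D nHG pc (x := x).
case: (eqVneq (H : {set gT}) G) => [eHG | neHG]; first by left.
right.
have HGab : a \in H -> b \in H -> False.
  move=> aH bH; move/eqP: neHG; apply; apply/eqP; rewrite eqEsubset sHG /=.
  case: D => GE _ _ _ _; rewrite GE gen_subG.
  by apply/subsetP => w; rewrite !inE => /orP[]/eqP->.
have ba : b * a^-1 = a * b.
  by have [e1 _] := dic_comm 1 D; rewrite expg1 in e1; rewrite e1.
have sHa : H \subset <[a]>.
  apply/subsetP => y yH; have yG := subsetP sHG y yH.
  case: (dic_elt D yG) => i [->|ey]; first by rewrite mem_cycle.
  exfalso.
  have e : a * y * a^-1 = a ^+ 2 * y.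
    by rewrite ey -!mulgA ba !mulgA -expgS -expgSr -(mulgA a a) -expgS -expgS.
  have a2H : a ^+ 2 \in H.
    have : a * y * a^-1 * y^-1 \in H by rewrite groupM ?groupV // (nH_conj _ nHG aG).
    by rewrite e mulgK.
  have yna : y \notin <[a]>.
    apply/negP => yA; move: bna.
    by rewrite (_ : b = (a ^+ i)^-1 * y) ?groupM ?groupV ?mem_cycle // ey mulKg.
  have a21 : a ^+ 2 != 1.
    apply/eqP => /eqP; rewrite -order_dvdn oa => /(dvdn_leq (isT : (0 < 2)%N)).
    by rewrite -{2}(muln1 2) leq_pmul2l // leqNgt n2.
  have H3 : (2 < #|H|)%N.
    rewrite (cardsD1 1 H) group1 add1n ltnS.
    have : [set a ^+ 2; y] \subset H :\ 1.
      apply/subsetP => w; rewrite !inE => /orP[]/eqP->; rewrite ?a2H ?yH ?a21 //.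
      by rewrite andbT; apply: contraNneq yna => ->; rewrite group1.
    move/subset_leq_card; rewrite cards2.
    suff -> : a ^+ 2 != y by [].
    by apply: contraNneq yna => <-; rewrite mem_cycle.
  have anH : a ^+ n \in H by rewrite -(dic_sq i D) -ey groupX.
  have aH : a \in H.
    case/orP: (A a aG a2H H3) => // h.
    rewrite (_ : a = a ^+ n * (a^-1 * a ^+ n)^-1) ?groupM ?groupV //.
    by rewrite invMg invgK mulgA mulgV mul1g.
  apply: HGab (aH) _.
  by rewrite (_ : b = (a ^+ i)^-1 * y) ?groupM ?groupV ?groupX // ey mulKg.
have m0 := cardG_gt0 H.
have mdv : (#|H| %| #[a])%N by rewrite orderE cardSg.
have Ht : H :=: <[a ^+ (#[a] %/ #|H|)]>.
  have : H \in [set K : {group gT} | K \subset <[a]> & #|K| == #|H|].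
    by rewrite inE sHa eqxx.
  by rewrite cycle_sub_group // => /set1P e; rewrite {1}e.
have tm := divnK mdv.
have oa0 : (0 < #[a])%N by rewrite oa muln_gt0.
have t0 : (0 < #[a] %/ #|H|)%N by rewrite divn_gt0 // dvdn_leq.
exists (#[a] %/ #|H|); split => //.
- by rewrite -oa -{2}tm dvdn_mulr.
- have e : (2 * n %/ (#[a] %/ #|H|) = #|H|)%N by rewrite -oa -{1}tm mulKn.
  rewrite e.
  apply/negPn/negP => hm; exfalso.
  have m3 : (2 < #|H|)%N.
    by move: hm m0; case: #|H| => [|[|[|k]]].
  move: hm; rewrite negb_or => /andP[hodd _].
  have hk := odd_double_half #|H|; rewrite (negbTE hodd) add0n -muln2 in hk.
  have anH : a ^+ n \in H.
    have en : n = ((#[a] %/ #|H|) * #|H|./2)%N.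
      apply/eqP; rewrite -(eqn_pmul2r (isT : (0 < 2)%N)) -mulnA hk tm oa mulnC //.
    by rewrite Ht en expgnA mem_cycle.
  have bH : b \in H.
    have b2 : b ^+ 2 \in H by case: D => _ an _ _ _; rewrite -an.
    case/orP: (A b bG b2 m3) => // h.
    by move: h; case: D => _ -> _ _ _; rewrite expgS expg1 mulKg.
  by move: bna; rewrite (subsetP sHa _ bH).
Qed.

Lemma dic_bwd (gT : finGroupType) (G H : {group gT}) n a b :
  (2 <= n)%N -> is_dicyclic G n a b -> H <| G ->
  (H :=: G \/
   exists t : nat, [/\ (0 < t)%N, (t %| 2 * n)%N,
                       odd ((2 * n) %/ t) || ((2 * n) %/ t == 2)%N
                     & H :=: <[a ^+ t]>]) ->
  (exists C, ssg_perfect_code G H C).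
Proof.
move=> n2 D nHG; have n0 : (0 < n)%N by apply: leq_trans n2.
have [oa bna] := dic_ord n0 D.
have a2n : a ^+ (2 * n) = 1 by rewrite -oa expg_order.
have an2 : (a ^+ n) ^+ 2 = 1 by rewrite -expgnA mulnC.
case=> [eHG | [t [t0 tdv cond Ht]]].
  apply: exists_pc nHG _ => x xG _; right; exists 1.
  by rewrite mulg1 groupV eHG xG expg1n.
have mE : #|H| = (2 * n %/ t)%N by rewrite Ht -orderE orderXdiv ?oa.
apply: exists_pc nHG _ => x xG x2.
case/orP: cond => [modd | /eqP m2]; last by left; rewrite mE m2.
right; rewrite -mE in modd.
have m0 := cardG_gt0 H.
have tm : (t * #|H| = 2 * n)%N by rewrite mE mulnC divnK.
have L w : w \in <[a]> -> w ^+ #|H| = 1 -> w \in H.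
  move=> /cycleP[k ->] /eqP; rewrite -expgnA -order_dvdn oa -tm.
  rewrite (dvdn_pmul2r m0) => /dvdnP[q ->].
  by rewrite Ht mulnC expgnA mem_cycle.
have anH : a ^+ n \notin H.
  apply/negP => h; have := order_dvdG h.
  rewrite orderXdiv oa ?dvdn_mull // mulnK // dvdn2.
  by rewrite modd.
case: (dic_elt D xG) => i [ex|ex]; last first.
  by rewrite ex (dic_sq _ D) in x2; rewrite x2 in anH.
have u2m : (x ^+ #|H|) ^+ 2 = 1.
  by rewrite -expgnA mulnC expgnA (expg_cardG x2).
have xmG : x ^+ #|H| \in G by rewrite groupX.
case: (dic_inv n0 D xmG u2m) => e.
  exists 1; rewrite mulg1 groupV expg1n; split => //.
  by apply: L => //; rewrite ex mem_cycle.
exists (a ^+ n); split => //.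
apply: L; first by rewrite ex groupM ?groupV ?mem_cycle.
rewrite expgMn; last first.
  rewrite ex; apply/commute_sym; apply/commuteV; apply: commuteX2.
  exact: commute_refl.
by rewrite expVgn e -(expg_mod _ an2) modn2 modd expg1 mulVg.
Qed.

Unset Implicit Arguments.
Set Strict Implicit.
Theorem theorem3p15 (gT : finGroupType) (G H : {group gT}) (n : nat) (a b : gT) :
  (2 <= n)%N -> is_dicyclic G n a b -> H <| G ->
  (exists C : {set gT}, ssg_perfect_code G H C) <->
  (H :=: G \/
   exists t : nat, [/\ (0 < t)%N, (t %| 2 * n)%N,
                       odd ((2 * n) %/ t) || ((2 * n) %/ t == 2)%N
                     & H :=: <[a ^+ t]>]).
Proof.
move=> n2 D nHG; split; [exact: dic_fwd n2 D nHG | exact: dic_bwd n2 D nHG].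
Qed.
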